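(* Let $(X,d)$ be a compact metric space, $\mu$ a Borel measure on $X$ with $\mu(X)>0$, $\{f_n\}_{n\in\mathbb{N}}$ a sequence of homeomorphisms of $X$ and $f$ a homeomorphism of $X$ such that $f_n\to f$ uniformly and $f_n^{-1}\to f^{-1}$ uniformly on $X$. Then $x\in UE^\mu_f(X)$ if and only if there exists $\delta>0$ such that for each $z\in B(x,\delta)$, $$\mu\Big(\Big\{y\in B(x,\delta):\ \bigcup_{m\ge 1}\bigcap_{n\ge m}E_z\big(f_n,y,\tfrac{\delta}{3}\big)=\emptyset\Big\}\Big)=0.$$
   Context: $B(x,\epsilon)=\{y:d(x,y)<\epsilon\}$. For a homeomorphism $g$ of $X$, $x,y\in X$ and $\epsilon>0$, $E_y(g,x,\epsilon)=\{k\in\mathbb{Z}: d(g^k(x),g^k(y))>\epsilon\}$. For a point $x$, $\mathfrak{c}>0$ and $z\in B(x,\mathfrak{c})$, $\Gamma^{\mathfrak{c}}_f(z)=\{y\in B(x,\mathfrak{c}): d(f^n(y),f^n(z))\le\mathfrak{c}\ \forall n\in\mathbb{Z}\}$. $x$ is a $\mu$-uniformly expansive point of $f$ if there is $\mathfrak{c}>0$ with $\mu(\Gamma^{\mathfrak{c}}_f(z))=0$ for every $z\in B(x,\mathfrak{c})$; $UE^\mu_f(X)$ is the set of such points. *)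

(* Defs.v *)
From HB Require Import structures.
From mathcomp Require Import all_boot all_order all_algebra.
From mathcomp Require Import all_classical all_reals all_analysis.
Set Implicit Arguments. Unset Strict Implicit. Unset Printing Implicit Defensive.
Import Order.TTheory GRing.Theory Num.Theory.
Local Open Scope classical_set_scope.
Local Open Scope ring_scope.

(* Metric spaces equipped with a designated point (harmless here: mu(X) > 0
   forces X to be nonempty); the point is needed by g_sigma_algebraType. *)
#[short(type="pmetricType")]
HB.structure Definition PointedMetric (K : numDomainType) :=
  { M of Metric K M & isPointed M }.

Notation borel_type X := (g_sigma_algebraType (@open X)).

Section Defs.
Context {R : realType} {X : pmetricType R}.


Definition Bd (x : X) (e : R) : set X := [set y | mdist x y < e].

Definition homeo_with (g ginv : X -> X) : Prop :=
  cancel g ginv /\ cancel ginv g /\ continuous g /\ continuous ginv.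

Definition zit (g ginv : X -> X) (k : int) : X -> X :=
  match k with
  | Posz n => iter n g
  | Negz n => iter n.+1 ginv
  end.

Definition unif_cvg (gs : nat -> X -> X) (g : X -> X) : Prop :=
  forall e : R, 0 < e -> exists N : nat, forall n, (N <= n)%N ->
    forall x, mdist (gs n x) (g x) < e.

(* E_y(g,x,e) = {k in Z : d(g^k x, g^k y) > e}. *)
Definition Eset (g ginv : X -> X) (y x : X) (e : R) : set int :=
  [set k | e < mdist (zit g ginv k x) (zit g ginv k y)].

Definition Gamma (f finv : X -> X) (x : X) (c : R) (z : X) : set X :=
  [set y | Bd x c y /\ forall n : int,
     mdist (zit f finv n y) (zit f finv n z) <= c].

Definition UE_point (mu : set (borel_type X) -> \bar R) (f finv : X -> X) (x : X)
  : Prop :=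
  exists c : R, 0 < c /\ forall z, Bd x c z -> mu (Gamma f finv x c z) = 0%E.

End Defs.

(* Main.v *)
Require Import Defs.
From HB Require Import structures.
From mathcomp Require Import all_boot all_order all_algebra.
From mathcomp Require Import all_classical all_reals all_analysis.
From mathcomp Require Import lra.
Import Order.TTheory GRing.Theory Num.Theory.
Local Open Scope classical_set_scope.
Local Open Scope ring_scope.
Import metricType_numDomainType.

Section H.
Context {R : realType} {X : pmetricType R}.

Definition ED (g : X -> X) := forall (y : X) (e : R), 0 < e ->
  exists2 η : R, 0 < η & forall t, mdist y t < η -> mdist (g y) (g t) < e.

Lemma cont_ED g : continuous g -> ED g.
Proof.
move=> hg y e e0.
have := (cvgrPdist_lt (F:=nbhs y) g (g y)).1 (hg y) e e0.
move=> H; have [η η0 Hη] := (nbhs_mdistP y _).1 (H _); by exists η => // t /Hη.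
Qed.

Lemma ED_comp g h : ED g -> ED h -> ED (g \o h).
Proof.
move=> Hg Hh y e e0.
have [η1 η10 H1] := Hg (h y) e e0.
have [η2 η20 H2] := Hh y η1 η10.
by exists η2 => // t /H2 /H1.
Qed.

Lemma ED_id : ED id.
Proof. by move=> y e e0; exists e. Qed.

Lemma ED_cst (a : X) : ED (fun=> a).
Proof. by move=> y e e0; exists 1 => // t _; rewrite mdistxx. Qed.

Lemma ED_iter g n : ED g -> ED (iter n g).
Proof.
move=> Hg; elim: n => [|n IH]; first exact: ED_id.
have -> : iter n.+1 g = g \o iter n g by apply/funext => t; rewrite iterS.
exact: ED_comp.
Qed.

Lemma ED_zit g ginv k : ED g -> ED ginv -> ED (zit g ginv k).
Proof. by move=> Hg Hgi; case: k => n /=; apply: ED_iter. Qed.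

Lemma open_gt (g h : X -> X) (e : R) : ED g -> ED h ->
  open [set y | e < mdist (g y) (h y)].
Proof.
move=> Hg Hh; rewrite openE => y /= Hy; rewrite /interior.
apply/nbhs_mdistP.
set η := (mdist (g y) (h y) - e) / 2.
have η0 : 0 < η by rewrite /η divr_gt0 // subr_gt0.
have [a a0 Ha] := Hg y η η0.
have [b b0 Hb] := Hh y η η0.
exists (Num.min a b); first by rewrite /= lt_min a0 b0.
move=> t /=; rewrite lt_min => /andP[ta tb].
have h1 := Ha t ta; have h2 := Hb t tb.
have t1 := metric_triangle (g y) (g t) (h y).
have t2 := metric_triangle (g t) (h t) (h y).
rewrite (metric_sym (h t) (h y)) in t2.
rewrite /η in h1 h2; lra.
Qed.

Lemma open_Bd (x : X) d : open (Bd x d).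
Proof.
rewrite openE => y /= Hy; rewrite /interior; apply/nbhs_mdistP.
exists (d - mdist x y); first by rewrite /= subr_gt0.
move=> t /= Ht; rewrite /Bd /=.
have := metric_triangle x y t; lra.
Qed.

Lemma meas_open (A : set X) : open A -> measurable (A : set (borel_type X)).
Proof. by move=> oA; apply: sub_sigma_algebra. Qed.

Lemma meas_le (g h : X -> X) (e : R) : ED g -> ED h ->
  measurable ([set y | mdist (g y) (h y) <= e] : set (borel_type X)).
Proof.
move=> Hg Hh.
rewrite (_ : [set y | _] = ~` [set y | e < mdist (g y) (h y)]).
  by apply: measurableC; apply: meas_open; apply: open_gt.
by apply/seteqP; split => y /=; rewrite leNgt => /negP.
Qed.

Lemma meas_bigcap_int (F : int -> set (borel_type X)) :
  (forall k, measurable (F k)) -> measurable (\bigcap_(k in setT) F k).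
Proof.
move=> HF.
rewrite (_ : \bigcap_(k in setT) F k =
   \bigcap_(n in setT) F (Posz n) `&` \bigcap_(n in setT) F (Negz n)).
  by apply: measurableI; apply: bigcapT_measurable => n.
apply/seteqP; split => y.
  by move=> H; split => n _; apply: H.
by move=> [H1 H2] [n|n] _; [apply: H1|apply: H2].
Qed.

Lemma iter_cvg (gs : nat -> X -> X) g : unif_cvg gs g -> ED g ->
  forall n y (e : R), 0 < e -> exists N, forall m, (N <= m)%N ->
    mdist (iter n (gs m) y) (iter n g y) < e.
Proof.
move=> Hu Hg; elim=> [|n IH] y e e0.
  by exists 0%N => m _ /=; rewrite mdistxx.
have e20 : 0 < e / 2 by rewrite divr_gt0.
have [η η0 Hη] := Hg (iter n g y) (e / 2) e20.
have [N1 H1] := IH y η η0.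
have [N2 H2] := Hu (e / 2) e20.
exists (maxn N1 N2) => m; rewrite geq_max => /andP[m1 m2].
rewrite !iterS.
have a1 := H2 m m2 (iter n (gs m) y).
have a2 := Hη (iter n (gs m) y); rewrite metric_sym in a2.
have a3 := a2 (H1 m m1).
rewrite metric_sym in a3.
have := metric_triangle (gs m (iter n (gs m) y)) (g (iter n (gs m) y)) (g (iter n g y)).
lra.
Qed.

Lemma zit_cvg (gs gsinv : nat -> X -> X) g ginv :
  unif_cvg gs g -> unif_cvg gsinv ginv -> ED g -> ED ginv ->
  forall k y (e : R), 0 < e -> exists N, forall m, (N <= m)%N ->
    mdist (zit (gs m) (gsinv m) k y) (zit g ginv k y) < e.
Proof.
move=> H1 H2 H3 H4 [n|n] y e e0.
  exact: (iter_cvg _ _ H1 H3 n y e e0).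
exact: (iter_cvg _ _ H2 H4 n.+1 y e e0).
Qed.


Lemma claimA (fs fsinv : nat -> X -> X) f finv :
  unif_cvg fs f -> unif_cvg fsinv finv -> ED f -> ED finv ->
  forall (z y : X) (d : R),
  \bigcup_(m in [set m : nat | (1 <= m)%N])
     \bigcap_(n in [set n : nat | (m <= n)%N])
       Eset (fs n) (fsinv n) z y d = set0 ->
  forall k, mdist (zit f finv k y) (zit f finv k z) <= d.
Proof.
move=> H1 H2 H3 H4 z y d HU k.
rewrite leNgt; apply/negP => Hlt.
set D := mdist (zit f finv k y) (zit f finv k z) in Hlt.
have eps0 : 0 < (D - d) / 2 by rewrite divr_gt0 // subr_gt0.
have [N1 HN1] := zit_cvg _ _ _ _ H1 H2 H3 H4 k y _ eps0.
have [N2 HN2] := zit_cvg _ _ _ _ H1 H2 H3 H4 k z _ eps0.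
have : (\bigcup_(m in [set m : nat | (1 <= m)%N])
     \bigcap_(n in [set n : nat | (m <= n)%N])
       Eset (fs n) (fsinv n) z y d) k; last by rewrite HU.
exists (maxn 1 (maxn N1 N2)); first by rewrite /= leq_max.
move=> n /=; rewrite !geq_max => /and3P[_ n1 n2].
have a1 := HN1 n n1; have a2 := HN2 n n2.
rewrite /D in Hlt.
set a := zit (fs n) (fsinv n) k y in a1 *; set b := zit (fs n) (fsinv n) k z in a2 *.
set fa := zit f finv k y in a1 Hlt *; set fb := zit f finv k z in a2 Hlt *.
have t1 := metric_triangle fa a fb.
have t2 := metric_triangle a b fb.
rewrite (metric_sym fa a) in t1.
rewrite /D in eps0 Hlt a1 a2; rewrite /Eset /=.
clear HN1 HN2 HU.
lra.
Qed.

Lemma claimB (fs fsinv : nat -> X -> X) f finv :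
  unif_cvg fs f -> unif_cvg fsinv finv -> ED f -> ED finv ->
  forall (z y : X) (c d : R), c < d ->
  (forall k, mdist (zit f finv k y) (zit f finv k z) <= c) ->
  \bigcup_(m in [set m : nat | (1 <= m)%N])
     \bigcap_(n in [set n : nat | (m <= n)%N])
       Eset (fs n) (fsinv n) z y d = set0.
Proof.
move=> H1 H2 H3 H4 z y c d cd Hc.
rewrite -subset0 => k [m _ Hm].
have eps0 : 0 < (d - c) / 2 by rewrite divr_gt0 // subr_gt0.
have [N1 HN1] := zit_cvg _ _ _ _ H1 H2 H3 H4 k y _ eps0.
have [N2 HN2] := zit_cvg _ _ _ _ H1 H2 H3 H4 k z _ eps0.
have := Hm (maxn m (maxn N1 N2)) (leq_maxl _ _); rewrite /Eset /=.
have a1 := HN1 (maxn m (maxn N1 N2)) (leq_trans (leq_maxl _ _) (leq_maxr _ _)).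
have a2 := HN2 (maxn m (maxn N1 N2)) (leq_trans (leq_maxr _ _) (leq_maxr _ _)).
have hc := Hc k.
set n := maxn m (maxn N1 N2) in a1 a2 *.
set a := zit (fs n) (fsinv n) k y in a1 *; set b := zit (fs n) (fsinv n) k z in a2 *.
set fa := zit f finv k y in a1 hc *; set fb := zit f finv k z in a2 hc *.
have t1 := metric_triangle a fa b.
have t2 := metric_triangle fa fb b.
rewrite (metric_sym fb b) in t2.
move=> h; lra.
Qed.


Lemma meas_Gamma f finv (x z : X) c : ED f -> ED finv ->
  measurable (Gamma f finv x c z : set (borel_type X)).
Proof.
move=> Hf Hfi.
rewrite (_ : Gamma f finv x c z = Bd x c `&` \bigcap_(k in setT)
   [set y | mdist (zit f finv k y) (zit f finv k z) <= c]).
  apply: measurableI; first by apply: meas_open; apply: open_Bd.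
  apply: meas_bigcap_int => k; apply: meas_le; first exact: ED_zit.
  exact: ED_cst.
apply/seteqP; split => y [H1 H2]; split => // k; [move=> _|]; exact: H2.
Qed.

Definition Sset (fs fsinv : nat -> X -> X) (x z : X) (r d : R) : set X :=
  [set y | Bd x r y /\
        \bigcup_(m in [set m : nat | (1 <= m)%N])
          \bigcap_(n in [set n : nat | (m <= n)%N])
            Eset (fs n) (fsinv n) z y d = set0].

Lemma meas_S (fs fsinv : nat -> X -> X) (x z : X) r d :
  (forall n, ED (fs n)) -> (forall n, ED (fsinv n)) ->
  measurable (Sset fs fsinv x z r d : set (borel_type X)).
Proof.
move=> Hf Hfi.
rewrite (_ : Sset fs fsinv x z r d = Bd x r `&` \bigcap_(k in setT)
   \bigcap_(m in setT) \bigcup_(n in [set n : nat | (m <= n)%N])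
   [set y | mdist (zit (fs n) (fsinv n) k y) (zit (fs n) (fsinv n) k z) <= d]).
  apply: measurableI; first by apply: meas_open; apply: open_Bd.
  apply: meas_bigcap_int => k; apply: bigcapT_measurable => m.
  apply: bigcup_measurable => n _; apply: meas_le; first exact: ED_zit.
  exact: ED_cst.
apply/seteqP; split => y [H1 H2]; split => //.
  move=> k _ m _.
  have [//|Hno] := pselect ((\bigcup_(n in [set n : nat | (m <= n)%N])
   [set y | mdist (zit (fs n) (fsinv n) k y) (zit (fs n) (fsinv n) k z) <= d]) y).
  exfalso.
  have : (\bigcup_(m in [set m : nat | (1 <= m)%N])
          \bigcap_(n in [set n : nat | (m <= n)%N])
            Eset (fs n) (fsinv n) z y d) k; last by rewrite H2.
  exists (maxn 1 m); first by rewrite /= leq_max.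
  move=> n /=; rewrite geq_max => /andP[_ mn].
  rewrite /Eset /= ltNge; apply/negP => Hle; apply: Hno; exists n => //.
rewrite -subset0 => k [m _ Hm].
have [n mn Hn] := H2 k I m I.
have := Hm n mn; rewrite /Eset /=.
by rewrite ltNge Hn.
Qed.

End H.

Theorem theorem3p6 (R : realType) (X : pmetricType R)
  (hX : compact [set: X])
  (mu : {measure set (borel_type X) -> \bar R})
  (hmu : (0 < mu [set: X])%E)
  (fs fsinv : nat -> X -> X) (f finv : X -> X)
  (hfs : forall n, homeo_with (fs n) (fsinv n))
  (hf : homeo_with f finv)
  (hcvg : unif_cvg fs f) (hcvginv : unif_cvg fsinv finv)
  (x : X) :
  UE_point mu f finv x <->
  exists delta : R, 0 < delta /\
    forall z, Bd x delta z ->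
      mu [set y | Bd x delta y /\
        \bigcup_(m in [set m : nat | (1 <= m)%N])
          \bigcap_(n in [set n : nat | (m <= n)%N])
            Eset (fs n) (fsinv n) z y (delta / 3) = set0] = 0%E.
Proof.
have EDf := cont_ED _ hf.2.2.1.
have EDfi := cont_ED _ hf.2.2.2.
have EDfs : forall n, ED (fs n) by move=> n; exact: cont_ED _ (hfs n).2.2.1.
have EDfsi : forall n, ED (fsinv n) by move=> n; exact: cont_ED _ (hfs n).2.2.2.
split.
- case=> c [c0 H]; exists c; split => // z zB.
  change (mu (Sset fs fsinv x z c (c / 3)) = 0%E).
  apply/eqP; rewrite eq_le measure_ge0 andbT -(H z zB).
  apply: le_measure; rewrite ?inE; [exact: meas_S|exact: meas_Gamma|].
  move=> y [By HU]; split => // n.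
  apply: le_trans (claimA _ _ _ _ hcvg hcvginv EDf EDfi _ _ _ HU n) _; lra.
- case=> d [d0 H]; exists (d / 4); split; first by rewrite divr_gt0.
  move=> z zB.
  have zB' : Bd x d z by move: zB; rewrite /Bd /=; lra.
  apply/eqP; rewrite eq_le measure_ge0 andbT -(H z zB').
  change (mu (Gamma f finv x (d / 4) z) <= mu (Sset fs fsinv x z d (d / 3)))%E.
  apply: le_measure; rewrite ?inE; [exact: meas_Gamma|exact: meas_S|].
  move=> y [By Hy]; split; first by move: By; rewrite /Bd /=; lra.
  apply: (claimB _ _ _ _ hcvg hcvginv EDf EDfi z y (d / 4) (d / 3)); first lra.
  exact: Hy.
Qed.
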